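(* Let $p_0,p_1,p_2$ be positive integers with $\gcd(p_0,p_1,p_2)=1$, and put $n=p_0+p_1+p_2$. Let $E=(\mathbb{Z}/n\mathbb{Z})\times\{0,1,2\}$ and define permutations $\sigma_0,\sigma_1$ of $E$ by $$\sigma_0(m,0)=(m,1),\quad \sigma_0(m,1)=(m,2),\quad \sigma_0(m,2)=(m,0),$$ $$\sigma_1(m,0)=(m-p_1,2),\quad \sigma_1(m,1)=(m-p_2,0),\quad \sigma_1(m,2)=(m-p_0,1),$$ with arithmetic in the first coordinate modulo $n$. Let $N=\langle\sigma_0\sigma_1,\sigma_1\sigma_0\rangle$ and $H=\langle\sigma_0\rangle$. Then $N\cap H=\{\mathrm{id}\}$.
   Context: These $\sigma_0,\sigma_1$ are the monodromy permutations of the dessin drawn on the rational billiards surface of the triangle with angles $(p_0\pi/n,p_1\pi/n,p_2\pi/n)$, acting on its $3n$ edges labeled $(m,i)$. Products are composition of functions. *)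

(* Defs.v *)
From mathcomp Require Import all_boot all_fingroup.
Set Implicit Arguments. Unset Strict Implicit. Unset Printing Implicit Defensive.

Definition dn (p0 p1 p2 : nat) := (p0 + p1 + p2)%N.
Definition E (p0 p1 p2 : nat) := ('I_(dn p0 p1 p2) * 'I_3)%type.

Lemma dn_pos_of {n} (m : 'I_n) : (0 < n)%N.
Proof. exact: leq_ltn_trans (leq0n m) (ltn_ord m). Qed.

(* the residue (m - p) mod n, for m : Z/nZ and p : nat *)
Definition subZ {n} (m : 'I_n) (p : nat) : 'I_n :=
  Ordinal (ltn_pmod (m + (n - p %% n)) (dn_pos_of m)).

Definition i0 : 'I_3 := @Ordinal 3 0 isT.
Definition i1 : 'I_3 := @Ordinal 3 1 isT.
Definition i2 : 'I_3 := @Ordinal 3 2 isT.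

Definition sigma0_fun p0 p1 p2 (e : E p0 p1 p2) : E p0 p1 p2 :=
  let: (m, i) := e in
  if val i == 0 then (m, i1) else if val i == 1 then (m, i2) else (m, i0).

Definition sigma1_fun p0 p1 p2 (e : E p0 p1 p2) : E p0 p1 p2 :=
  let: (m, i) := e in
  if val i == 0 then (subZ m p1, i2)
  else if val i == 1 then (subZ m p2, i0) else (subZ m p0, i1).

Lemma sigma0_inj p0 p1 p2 : injective (@sigma0_fun p0 p1 p2).
Proof.
move=> [m i] [m' i'] /=.
case: i => [[|[|[|k]]] Hi] //; case: i' => [[|[|[|k']]] Hi'] //= [->];
by congr pair; apply: val_inj.
Qed.

Lemma subZ_inj n p : injective (fun m : 'I_n => subZ m p).
Proof.
move=> m m' /(congr1 val) /= /eqP H; apply: val_inj => /=.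
have n0 := dn_pos_of m.
rewrite -(eqn_modDr (p %% n)) in H.
rewrite -!addnA !subnK ?(ltnW (ltn_pmod _ n0)) // !modnDr in H.
by move/eqP: H; rewrite !modn_small.
Qed.

Lemma sigma1_inj p0 p1 p2 : injective (@sigma1_fun p0 p1 p2).
Proof.
move=> [m i] [m' i'] /=.
case: i => [[|[|[|k]]] Hi] //; case: i' => [[|[|[|k']]] Hi'] //= H;
case: H => H; (have -> : m = m' by [apply: (@subZ_inj _ p0); exact: val_inj | apply: (@subZ_inj _ p1); exact: val_inj | apply: (@subZ_inj _ p2); exact: val_inj]); by congr pair; apply: val_inj.
Qed.

Definition sigma0 p0 p1 p2 : {perm E p0 p1 p2} := perm (@sigma0_inj p0 p1 p2).
Definition sigma1 p0 p1 p2 : {perm E p0 p1 p2} := perm (@sigma1_inj p0 p1 p2).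

(* Main.v *)
Require Import Defs.
From mathcomp Require Import all_boot all_fingroup.

Section S.
Variables p0 p1 p2 : nat.
Local Notation T := (E p0 p1 p2).

Definition lvl_set : {set {perm T}} :=
  [set g : {perm T} | [forall x, (g x).2 == x.2]].

Lemma lvl_group : group_set lvl_set.
Proof.
apply/andP; split.
  by rewrite inE; apply/forallP => x; rewrite perm1.
apply/subsetP => g /mulsgP [a b]; rewrite !inE => /forallP Ha /forallP Hb ->.
by apply/forallP => x; rewrite permM (eqP (Hb _)) (eqP (Ha _)).
Qed.

Canonical lvl_grp := Group lvl_group.

Lemma s0s1_lvl : (sigma0 p0 p1 p2 * sigma1 p0 p1 p2)%g \in lvl_set.
Proof.
rewrite inE; apply/forallP => -[m [[|[|[|k]]] Hi]] //;
by rewrite permM !permE.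
Qed.

Lemma s1s0_lvl : (sigma1 p0 p1 p2 * sigma0 p0 p1 p2)%g \in lvl_set.
Proof.
rewrite inE; apply/forallP => -[m [[|[|[|k]]] Hi]] //;
by rewrite permM !permE.
Qed.

Lemma s0_pow k (x : T) : val (((sigma0 p0 p1 p2) ^+ k)%g x).2 = (x.2 + k) %% 3.
Proof.
elim: k x => [|k IH] x; first by rewrite expg0 perm1 addn0 modn_small.
rewrite expgSr permM permE; have := IH x.
case: (((sigma0 p0 p1 p2) ^+ k)%g x) => m i /= Hy.
have -> : ((x.2 + k.+1) %% 3 = ((x.2 + k) %% 3 + 1) %% 3)%N by rewrite modnDml addnS addn1.
rewrite -Hy.
by case: i Hy => [[|[|[|j]]] Hi].
Qed.
End S.

Theorem lemma5 (p0 p1 p2 : nat) :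
  (0 < p0)%N -> (0 < p1)%N -> (0 < p2)%N -> gcdn (gcdn p0 p1) p2 = 1%N ->
  (<< [set (sigma0 p0 p1 p2 * sigma1 p0 p1 p2)%g;
         (sigma1 p0 p1 p2 * sigma0 p0 p1 p2)%g] >>
     :&: <[sigma0 p0 p1 p2]>)%g = 1%g.
Proof.
move=> h0 _ _ _.
apply/eqP; rewrite eqEsubset sub1G andbT; apply/subsetP => g /setIP [gN /cycleP [k gk]].
have sub : (<< [set (sigma0 p0 p1 p2 * sigma1 p0 p1 p2)%g;
         (sigma1 p0 p1 p2 * sigma0 p0 p1 p2)%g] >> \subset lvl_grp p0 p1 p2)%g.
  by rewrite gen_subG; apply/subsetP => y /set2P [] ->;
    [exact: (s0s1_lvl p0 p1 p2) | exact: (s1s0_lvl p0 p1 p2)].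
have := subsetP sub _ gN; rewrite inE => /forallP H.
have n0 : (0 < dn p0 p1 p2)%N by rewrite /dn; apply: leq_trans h0 _; rewrite -addnA leq_addr.
have := H (Ordinal n0, i0) => /eqP /(congr1 val); rewrite gk s0_pow /= add0n => Hk.
have s3 : ((sigma0 p0 p1 p2) ^+ 3 = 1)%g.
  by apply/permP => -[m [[|[|[|j]]] Hi]] //; rewrite perm1 !expgS expg0 mulg1 !permM !permE /=;
    congr pair; apply: val_inj.
by rewrite (divn_eq k 3) Hk addn0 mulnC expgM s3 expg1n inE.
Qed.
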